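(* Let $r,k,s_1,\dots,s_k$ be nonnegative integers and $\Gamma$ the complete bipartite supernova quiver with these parameters. Let $\mathbf{v}\in\mathbb{Z}_{\ge0}^I$. If $\mathbf{v}\in\Phi(\Gamma)$ and $v_{(i;0)}>0$ for some $i\in\{1,\dots,k\}$, then $v_{(i;0)}\ge v_{(i;1)}\ge v_{(i;2)}\ge\cdots\ge v_{(i;s_i)}$.
   Context: $\Gamma$ has vertex set $I$ consisting of $(l)$, $l=1,\dots,r$, and $(i;j)$, $i=1,\dots,k$, $j=0,\dots,s_i$; arrows: one arrow $(l)\to(i;0)$ for every $l,i$, and one arrow $(i;j)\to(i;j-1)$ for $1\le j\le s_i$. $\Phi(\Gamma)\subset\mathbb{Z}^I$ is the root system of $\Gamma$: with the bilinear form $(\mathbf{e}_a,\mathbf{e}_a)=2$, $(\mathbf{e}_a,\mathbf{e}_b)=-$(number of edges joining $a,b$) for $a\ne b$, and the Weyl group $W$ generated by $s_a(\lambda)=\lambda-(\lambda,\mathbf{e}_a)\mathbf{e}_a$, the real roots are the $w(\mathbf{e}_a)$, and the imaginary roots are $\pm w(\delta)$ with $w\in W$ and $\delta$ a nonzero vector in $\mathbb{Z}_{\ge0}^I$ with connected support and $(\mathbf{e}_a,\delta)\le0$ for all $a$. *)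

(* Defs.v *)
From HB Require Import structures.
From mathcomp Require Import all_boot all_order all_algebra.
Set Implicit Arguments. Unset Strict Implicit. Unset Printing Implicit Defensive.
Import Order.TTheory GRing.Theory Num.Theory.
Local Open Scope ring_scope.

(* Complete bipartite supernova quiver with parameters r, k, s_1..s_k
   (s : 'I_k -> nat).  Vertices: inl l  = (l),  l < r;
   inr (Tagged i j) = (i;j), i < k, j <= s i. *)
Definition arms (k : nat) (s : 'I_k -> nat) := {i : 'I_k & 'I_(s i).+1}.
Definition vert (r k : nat) (s : 'I_k -> nat) : finType :=
  ('I_r + arms s)%type.

Definition arm (r k : nat) (s : 'I_k -> nat) (i : 'I_k) (j : 'I_(s i).+1)
  : vert r s := inr (Tagged (fun i => 'I_(s i).+1) j).

(* number of edges joining two vertices of the underlying graph (0 or 1):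
   (l) -- (i;0) for all l, i ; (i;j) -- (i;j-1) for 1 <= j <= s_i *)
Definition adj (r k : nat) (s : 'I_k -> nat) (a b : vert r s) : bool :=
  match a, b with
  | inl _, inl _ => false
  | inl _, inr y => nat_of_ord (tagged y) == 0%N
  | inr x, inl _ => nat_of_ord (tagged x) == 0%N
  | inr x, inr y =>
      (tag x == tag y) &&
      (((nat_of_ord (tagged x)).+1 == nat_of_ord (tagged y))
       || ((nat_of_ord (tagged y)).+1 == nat_of_ord (tagged x)))
  end.

Definition cartan (r k : nat) (s : 'I_k -> nat) (a b : vert r s) : int :=
  if a == b then 2 else - ((adj a b : nat)%:Z).

Definition form (r k : nat) (s : 'I_k -> nat) (x y : {ffun vert r s -> int}) : int :=
  \sum_(a : vert r s) \sum_(b : vert r s) x a * y b * cartan a b.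

Definition evec (r k : nat) (s : 'I_k -> nat) (a : vert r s) : {ffun vert r s -> int} :=
  [ffun b => ((a == b : nat))%:Z].

Definition refl (r k : nat) (s : 'I_k -> nat) (a : vert r s) (x : {ffun vert r s -> int})
  : {ffun vert r s -> int} :=
  [ffun b => x b - form x (evec a) * evec a b].

(* action of the Weyl group element s_{a_1} ... s_{a_n} given by w = [:: a_1; ...; a_n];
   every element of W is of this form *)
Definition weyl (r k : nat) (s : 'I_k -> nat) (w : seq (vert r s)) (x : {ffun vert r s -> int})
  : {ffun vert r s -> int} := foldr (@refl r k s) x w.

Definition connected_support (r k : nat) (s : 'I_k -> nat) (x : {ffun vert r s -> int}) : Prop :=
  forall a b : vert r s, x a != 0 -> x b != 0 ->
    connect (fun c d => [&& adj c d, x c != 0 & x d != 0]) a b.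

Definition fundamental (r k : nat) (s : 'I_k -> nat) (d : {ffun vert r s -> int}) : Prop :=
  [/\ d != 0, (forall a, 0 <= d a), connected_support d & (forall a, form (evec a) d <= 0)].

Definition real_root (r k : nat) (s : 'I_k -> nat) (v : {ffun vert r s -> int}) : Prop :=
  exists (a : vert r s) (w : seq (vert r s)), v = weyl w (evec a).

Definition imaginary_root (r k : nat) (s : 'I_k -> nat) (v : {ffun vert r s -> int}) : Prop :=
  exists (d : {ffun vert r s -> int}) (w : seq (vert r s)),
    fundamental d /\ (v = weyl w d \/ v = [ffun b => - weyl w d b]).

Definition is_root (r k : nat) (s : 'I_k -> nat) (v : {ffun vert r s -> int}) : Prop :=
  real_root v \/ imaginary_root v.

(* Main.v *)
Require Import Defs.
From HB Require Import structures.
From mathcomp Require Import all_boot all_order all_algebra.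
From mathcomp Require Import ring zify fingroup perm.
From Stdlib Require Import ClassicalEpsilon.
Import Order.TTheory GRing.Theory Num.Theory.
Set Implicit Arguments. Unset Strict Implicit. Unset Printing Implicit Defensive.
Local Open Scope ring_scope.

Local Notation form := Defs.form.
Local Notation refl := Defs.refl.
Local Notation weyl := Defs.weyl.

Lemma det_id_row n (A : 'M[int]_n) i0 :
  (forall i j, i != i0 -> A i j = (i == j)%:R) -> \det A = A i0 i0.
Proof.
move=> HA; rewrite /determinant (bigD1 (1%g : 'S_n) ) //= [X in _ + X]big1 ?addr0.
  rewrite odd_perm1 expr0 mul1r (bigD1 i0) //= perm1 big1 ?mulr1 // => i ii0.
  by rewrite perm1 HA // eqxx.
move=> p p1.
have [i pi] : exists i, p i != i.
  apply/existsP; apply: contraR p1 => /existsPn H; apply/eqP/permP => x.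
  by rewrite perm1; apply/eqP; move: (H x); rewrite negbK.
pose t := if i == i0 then p i0 else i.
have tn : t != i0.
  by rewrite /t; case: (eqVneq i i0) => [e|ne] //; move: pi; rewrite e.
have pt : p t != t.
  rewrite /t; case: (eqVneq i i0) => [e|ne] //; apply: contra pi => /eqP H.
  by rewrite e; apply/eqP; apply: perm_inj H.
by rewrite (bigD1 t) //= HA // [t == _]eq_sym (negbTE pt) mul0r mulr0.
Qed.

Section Roots.
Variables (r k : nat) (s : 'I_k -> nat).
Local Notation V := (vert r s).
Local Notation vec := {ffun V -> int}.

Lemma adjC (a b : V) : adj a b = adj b a.
Proof. by case: a => [x|x]; case: b => [y|y] //=; rewrite eq_sym orbC. Qed.

Lemma adjaa (a : V) : adj a a = false.
Proof.
case: a => [x|x] //=; rewrite eqxx orbb /=.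
by case: (tagged x) => m _ /=; elim: m.
Qed.

Lemma cartanC (a b : V) : cartan a b = cartan b a.
Proof. by rewrite /cartan eq_sym adjC. Qed.

Lemma cartan_aa (a : V) : cartan a a = 2.
Proof. by rewrite /cartan eqxx. Qed.

Lemma evE (a b : V) : evec a b = if a == b then 1 else 0.
Proof. by rewrite ffunE; case: (a == b). Qed.

Lemma sum_evl (b : V) (F : V -> int) : \sum_c evec b c * F c = F b.
Proof.
rewrite (bigD1 b) //= big1 ?addr0; first by rewrite evE eqxx mul1r.
by move=> c cb; rewrite evE eq_sym (negbTE cb) mul0r.
Qed.

Lemma sum_evr (b : V) (F : V -> int) : \sum_c F c * evec b c = F b.
Proof. by rewrite -[RHS]sum_evl; apply: eq_bigr => c _; rewrite mulrC. Qed.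

Lemma feE (x : vec) (a : V) : form x (evec a) = \sum_b x b * cartan b a.
Proof.
rewrite /form; apply: eq_bigr => b _.
rewrite -(sum_evr a (fun c => x b * cartan b c)).
by apply: eq_bigr => c _; ring.
Qed.

Lemma form_evl (a : V) (x : vec) : form (evec a) x = form x (evec a).
Proof.
rewrite feE /form (eq_bigr (fun c => evec a c * \sum_b x b * cartan c b)).
  by rewrite sum_evl; apply: eq_bigr => b _; rewrite cartanC.
by move=> c _; rewrite mulr_sumr; apply: eq_bigr => b _; ring.
Qed.

Lemma reflE (a : V) (x : vec) b : refl a x b = x b - form x (evec a) * evec a b.
Proof. by rewrite ffunE. Qed.

Lemma fe_refl (b : V) (x : vec) a :
  form (refl b x) (evec a) = form x (evec a) - form x (evec b) * cartan b a.
Proof.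
rewrite !feE; under eq_bigr do rewrite reflE mulrBl.
rewrite sumrB; congr (_ - _).
rewrite (eq_bigr (fun c => evec b c * (form x (evec b) * cartan c a))) ?sum_evl ?feE //.
by move=> c _; ring.
Qed.

Definition comb (p : int) (x : vec) (q : int) (y : vec) : vec :=
  [ffun c => p * x c + q * y c].

Lemma fe_comb p x q y a :
  form (comb p x q y) (evec a) = p * form x (evec a) + q * form y (evec a).
Proof.
rewrite !feE; under eq_bigr do rewrite ffunE.
rewrite !mulr_sumr -big_split; apply: eq_bigr => b _ /=; ring.
Qed.

Lemma refl_comb a p x q y : refl a (comb p x q y) = comb p (refl a x) q (refl a y).
Proof. by apply/ffunP => c; rewrite reflE fe_comb !ffunE; ring. Qed.

Lemma weyl_comb w p x q y : weyl w (comb p x q y) = comb p (weyl w x) q (weyl w y).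
Proof. by elim: w => //= a w IH; rewrite IH refl_comb. Qed.

Lemma weyl_cat (u w : seq V) x : weyl (u ++ w) x = weyl u (weyl w x).
Proof. by rewrite /Defs.weyl foldr_cat. Qed.

Lemma weyl_rcons (w : seq V) a x : weyl (rcons w a) x = weyl w (refl a x).
Proof. by rewrite -cats1 weyl_cat. Qed.

Definition eqw (u w : seq V) := forall x, weyl u x = weyl w x.

Lemma eqw_cat u u' w w' : eqw u u' -> eqw w w' -> eqw (u ++ w) (u' ++ w').
Proof. by move=> H1 H2 x; rewrite !weyl_cat H2 H1. Qed.

Lemma eqw_sym u w : eqw u w -> eqw w u.
Proof. by move=> H x; rewrite H. Qed.

Lemma eqw_trans u v w : eqw u v -> eqw v w -> eqw u w.
Proof. by move=> H1 H2 x; rewrite H1 H2. Qed.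

Lemma eqw_rcons u w a : eqw u w -> eqw (rcons u a) (rcons w a).
Proof. by move=> H x; rewrite !weyl_rcons H. Qed.

Lemma refl_invol (a : V) (x : vec) : refl a (refl a x) = x.
Proof. by apply/ffunP => c; rewrite !reflE fe_refl cartan_aa; ring. Qed.

Lemma cartan_ne (a b : V) : a != b -> cartan a b = - ((adj a b : nat)%:Z).
Proof. by rewrite /cartan => /negbTE ->. Qed.

Lemma refl_comm (a b : V) (x : vec) : ~~ adj a b -> a != b -> refl a (refl b x) = refl b (refl a x).
Proof.
move=> nab ab; have cab := @cartan_ne a b ab; rewrite (negbTE nab) /= in cab.
have cba : cartan b a = 0 by rewrite cartanC.
by apply/ffunP => c; rewrite !reflE !fe_refl cab cba; ring.
Qed.

Lemma refl_braid (a b : V) (x : vec) : adj a b ->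
  refl a (refl b (refl a x)) = refl b (refl a (refl b x)).
Proof.
move=> ab; have anb : a != b by apply: contraTneq ab => ->; rewrite adjaa.
have cab := @cartan_ne a b anb; rewrite ab /= in cab.
have cba : cartan b a = -1 by rewrite cartanC.
by apply/ffunP => c; rewrite !reflE !fe_refl cab cba !cartan_aa; ring.
Qed.


Lemma fe_ev (c a : V) : form (evec c) (evec a) = cartan c a.
Proof. by rewrite feE sum_evl. Qed.

Definition M (w : seq V) : 'M[int]_#|V| :=
  \matrix_(i, j) weyl w (evec (enum_val j)) (enum_val i).

Lemma sumV (F : V -> int) : \sum_(m < #|V|) F (enum_val m) = \sum_c F c.
Proof.
rewrite (reindex (@enum_rank V)) /=; last by apply/onW_bij/enum_rank_bij.
by apply: eq_bigr => c _; rewrite enum_rankK.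
Qed.

Lemma M_nil : M [::] = 1%:M.
Proof.
apply/matrixP => i j; rewrite !mxE /= evE (inj_eq enum_val_inj) eq_sym.
by case: (i == j).
Qed.

Lemma M_cons a w : M (a :: w) = M [:: a] *m M w.
Proof.
apply/matrixP => i j; rewrite !mxE /= reflE.
rewrite (eq_bigr (fun m => (evec (enum_val m) (enum_val i)
     - cartan (enum_val m) a * evec a (enum_val i)) * weyl w (evec (enum_val j)) (enum_val m))); last first.
  by move=> m _; rewrite !mxE /= reflE fe_ev.
rewrite (sumV (fun c => (evec c (enum_val i) - cartan c a * evec a (enum_val i)) * weyl w (evec (enum_val j)) c)).
under eq_bigr do rewrite mulrBl.
rewrite sumrB; congr (_ - _).
  by rewrite -(sum_evl (enum_val i) (fun c => weyl w (evec (enum_val j)) c)); apply: eq_bigr => c _; rewrite !evE eq_sym.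
rewrite feE mulrC mulr_sumr; apply: eq_bigr => c _; ring.
Qed.

End Roots.

Section Roots.
Variables (r k : nat) (s : 'I_k -> nat).
Local Notation V := (vert r s).
Local Notation vec := {ffun V -> int}.
Lemma det_M1 (a : V) : \det (M [:: a]) = -1.
Proof.
rewrite (@det_id_row _ _ (enum_rank a)).
  by rewrite !mxE /= reflE fe_ev enum_rankK !evE eqxx cartan_aa.
move=> i j ia; rewrite !mxE /= reflE fe_ev !evE.
have -> : (a == enum_val i) = false.
  apply/negbTE; apply: contra ia => /eqP ->; by rewrite enum_valK.

have -> : (enum_val j == enum_val i) = (i == j).
  by rewrite eq_sym; apply/eqP/eqP => [/enum_val_inj|->].

by case: (i == j); rewrite mulr0 subr0.
Qed.

Lemma det_M (w : seq V) : \det (M w) = (-1) ^+ size w.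
Proof.
elim: w => [|a w IH]; first by rewrite M_nil det1.
by rewrite M_cons det_mulmx det_M1 IH /= exprS.
Qed.

Lemma odd_eqw (u w : seq V) : eqw u w -> odd (size u) = odd (size w).
Proof.
move=> H; have : M u = M w by apply/matrixP => i j; rewrite !mxE H.
move=> /(congr1 determinant); rewrite !det_M -[(-1) ^+ size u]signr_odd -[(-1) ^+ size w]signr_odd.
by move/signr_inj.
Qed.
End Roots.


Definition pb (P : Prop) : bool := if excluded_middle_informative P then true else false.
Lemma pbP (P : Prop) : reflect P (pb P).
Proof. by rewrite /pb; case: excluded_middle_informative => H; constructor. Qed.

Section Roots.
Variables (r k : nat) (s : 'I_k -> nat).
Local Notation V := (vert r s).
Local Notation vec := {ffun V -> int}.

Definition has_len (w : seq V) (n : nat) : bool :=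
  pb (exists u : seq V, size u = n /\ eqw u w).

Lemma has_len_ex (w : seq V) : exists n, has_len w n.
Proof. by exists (size w); apply/pbP; exists w. Qed.

Definition L (w : seq V) : nat := ex_minn (has_len_ex w).

Lemma L_spec (w : seq V) : exists u, size u = L w /\ eqw u w.
Proof. by rewrite /L; case: ex_minnP => m /pbP. Qed.

Lemma L_min (u w : seq V) : eqw u w -> (L w <= size u)%N.
Proof. by rewrite /L; case: ex_minnP => m _ H E; apply: H; apply/pbP; exists u. Qed.

Lemma L_eqw (u w : seq V) : eqw u w -> L u = L w.
Proof.
move=> E; have [u1 [s1 E1]] := L_spec u; have [w1 [s2 E2]] := L_spec w.
apply/eqP; rewrite eqn_leq; apply/andP; split.
  by rewrite -s2; apply: L_min; exact: eqw_trans E2 (eqw_sym E).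
by rewrite -s1; apply: L_min; exact: eqw_trans E1 E.
Qed.

Lemma L_size (w : seq V) : (L w <= size w)%N.
Proof. exact: L_min. Qed.

Lemma L_cat (u w : seq V) : (L (u ++ w) <= L u + L w)%N.
Proof.
have [u1 [s1 E1]] := L_spec u; have [w1 [s2 E2]] := L_spec w.
by rewrite -s1 -s2 -size_cat; apply: L_min; apply: eqw_cat.
Qed.

Lemma L_odd (w : seq V) : odd (L w) = odd (size w).
Proof. by have [u [<- E]] := L_spec w; apply: odd_eqw. Qed.

Lemma L_rcons_le (w : seq V) a : (L (rcons w a) <= (L w).+1)%N.
Proof.
have [u [su E]] := L_spec w.
by rewrite -su -(size_rcons u a); apply: L_min; apply: eqw_rcons.
Qed.

Lemma eqw_rrcons (w : seq V) a : eqw (rcons (rcons w a) a) w.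
Proof. by move=> x; rewrite !weyl_rcons refl_invol. Qed.

Lemma L_rcons (w : seq V) a : L (rcons w a) = (L w).+1 \/ L w = (L (rcons w a)).+1.
Proof.
have h1 := L_rcons_le w a.
have h2 : (L w <= (L (rcons w a)).+1)%N.
  by rewrite -(L_eqw (eqw_rrcons w a)); apply: L_rcons_le.
have h3 : L (rcons w a) <> L w.
  move=> e; have := L_odd (rcons w a); rewrite e L_odd size_rcons /=.
  by case: (odd (size w)).
lia.
Qed.

End Roots.


Section Roots.
Variables (r k : nat) (s : 'I_k -> nat).
Local Notation V := (vert r s).
Local Notation vec := {ffun V -> int}.

Lemma dihedral (a b : V) (vI : seq V) : a != b ->
  all (fun c => (c == a) || (c == b)) vI ->
  (forall z, all (fun c => (c == a) || (c == b)) z -> eqw z vI -> (size vI <= size z)%N) ->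
  (forall z, all (fun c => (c == a) || (c == b)) z -> eqw z (rcons vI a) -> (size vI < size z)%N) ->
  exists p q : int, 0 <= p /\ 0 <= q /\ weyl vI (evec a) = comb p (evec a) q (evec b).
Proof.
move=> ab HI H1 H2.
have cab_eq := @cartan_ne _ _ _ a b ab.
case: (boolP (adj a b)) => adjab.
- have cab : cartan a b = -1 by rewrite cab_eq adjab.
  have cba : cartan b a = -1 by rewrite cartanC.
  clear cab_eq.
  move: HI H1 H2; case: vI => [|x1 [|x2 [|x3 [|x4 rest]]]] HI.
  + move=> H1 H2; by exists 1, 0; split; [done|split; [done|]]; apply/ffunP => c;
      rewrite /Defs.weyl /= ?reflE ?fe_refl ?fe_ev ?cartan_aa ?cab ?cba !ffunE; ring.
  + move: HI => /andP[/orP[/eqP->|/eqP->] HI]; move=> H1 H2.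
    * exfalso; suff HH : (size [:: a] < size ([::] : seq V))%N by move: HH; rewrite /= ?size_cat /=; (lia || (move=> HH; discriminate HH)).
    apply: H2; [by rewrite /= ?eqxx ?orbT ?andbT | (move=> x; apply/ffunP => c; rewrite /Defs.weyl /= ?reflE ?fe_refl ?cartan_aa ?cab ?cba; ring)].
    * by exists 1, 1; split; [done|split; [done|]]; apply/ffunP => c;
      rewrite /Defs.weyl /= ?reflE ?fe_refl ?fe_ev ?cartan_aa ?cab ?cba !ffunE; ring.
  + move: HI => /andP[/orP[/eqP->|/eqP->] HI]; move: HI => /andP[/orP[/eqP->|/eqP->] HI]; move=> H1 H2.
    * exfalso; suff HH : (size [:: a; a] <= size ([::] : seq V))%N by move: HH; rewrite /= ?size_cat /=; (lia || (move=> HH; discriminate HH)).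
    apply: H1; [by rewrite /= ?all_cat ?HI ?eqxx ?orbT ?andbT | (move=> x; apply/ffunP => c; rewrite /Defs.weyl /= ?reflE ?fe_refl ?cartan_aa ?cab ?cba; ring)].
    * by exists 0, 1; split; [done|split; [done|]]; apply/ffunP => c;
      rewrite /Defs.weyl /= ?reflE ?fe_refl ?fe_ev ?cartan_aa ?cab ?cba !ffunE; ring.
    * exfalso; suff HH : (size [:: b; a] < size [:: b])%N by move: HH; rewrite /= ?size_cat /=; (lia || (move=> HH; discriminate HH)).
    apply: H2; [by rewrite /= ?eqxx ?orbT ?andbT | (move=> x; apply/ffunP => c; rewrite /Defs.weyl /= ?reflE ?fe_refl ?cartan_aa ?cab ?cba; ring)].
    * exfalso; suff HH : (size [:: b; b] <= size ([::] : seq V))%N by move: HH; rewrite /= ?size_cat /=; (lia || (move=> HH; discriminate HH)).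
    apply: H1; [by rewrite /= ?all_cat ?HI ?eqxx ?orbT ?andbT | (move=> x; apply/ffunP => c; rewrite /Defs.weyl /= ?reflE ?fe_refl ?cartan_aa ?cab ?cba; ring)].
  + move: HI => /andP[/orP[/eqP->|/eqP->] HI]; move: HI => /andP[/orP[/eqP->|/eqP->] HI]; move: HI => /andP[/orP[/eqP->|/eqP->] HI]; move=> H1 H2.
    * exfalso; suff HH : (size [:: a; a; a] <= size [:: a])%N by move: HH; rewrite /= ?size_cat /=; (lia || (move=> HH; discriminate HH)).
    apply: H1; [by rewrite /= ?all_cat ?HI ?eqxx ?orbT ?andbT | (move=> x; apply/ffunP => c; rewrite /Defs.weyl /= ?reflE ?fe_refl ?cartan_aa ?cab ?cba; ring)].
    * exfalso; suff HH : (size [:: a; a; b] <= size [:: b])%N by move: HH; rewrite /= ?size_cat /=; (lia || (move=> HH; discriminate HH)).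
    apply: H1; [by rewrite /= ?all_cat ?HI ?eqxx ?orbT ?andbT | (move=> x; apply/ffunP => c; rewrite /Defs.weyl /= ?reflE ?fe_refl ?cartan_aa ?cab ?cba; ring)].
    * exfalso; suff HH : (size [:: a; b; a] < size [:: a; b])%N by move: HH; rewrite /= ?size_cat /=; (lia || (move=> HH; discriminate HH)).
    apply: H2; [by rewrite /= ?eqxx ?orbT ?andbT | (move=> x; apply/ffunP => c; rewrite /Defs.weyl /= ?reflE ?fe_refl ?cartan_aa ?cab ?cba; ring)].
    * exfalso; suff HH : (size [:: a; b; b] <= size [:: a])%N by move: HH; rewrite /= ?size_cat /=; (lia || (move=> HH; discriminate HH)).
    apply: H1; [by rewrite /= ?all_cat ?HI ?eqxx ?orbT ?andbT | (move=> x; apply/ffunP => c; rewrite /Defs.weyl /= ?reflE ?fe_refl ?cartan_aa ?cab ?cba; ring)].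
    * exfalso; suff HH : (size [:: b; a; a] <= size [:: b])%N by move: HH; rewrite /= ?size_cat /=; (lia || (move=> HH; discriminate HH)).
    apply: H1; [by rewrite /= ?all_cat ?HI ?eqxx ?orbT ?andbT | (move=> x; apply/ffunP => c; rewrite /Defs.weyl /= ?reflE ?fe_refl ?cartan_aa ?cab ?cba; ring)].
    * exfalso; suff HH : (size [:: b; a; b] < size [:: a; b])%N by move: HH; rewrite /= ?size_cat /=; (lia || (move=> HH; discriminate HH)).
    apply: H2; [by rewrite /= ?eqxx ?orbT ?andbT | (move=> x; apply/ffunP => c; rewrite /Defs.weyl /= ?reflE ?fe_refl ?cartan_aa ?cab ?cba; ring)].
    * exfalso; suff HH : (size [:: b; b; a] <= size [:: a])%N by move: HH; rewrite /= ?size_cat /=; (lia || (move=> HH; discriminate HH)).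
    apply: H1; [by rewrite /= ?all_cat ?HI ?eqxx ?orbT ?andbT | (move=> x; apply/ffunP => c; rewrite /Defs.weyl /= ?reflE ?fe_refl ?cartan_aa ?cab ?cba; ring)].
    * exfalso; suff HH : (size [:: b; b; b] <= size [:: b])%N by move: HH; rewrite /= ?size_cat /=; (lia || (move=> HH; discriminate HH)).
    apply: H1; [by rewrite /= ?all_cat ?HI ?eqxx ?orbT ?andbT | (move=> x; apply/ffunP => c; rewrite /Defs.weyl /= ?reflE ?fe_refl ?cartan_aa ?cab ?cba; ring)].
  + move: HI => /andP[/orP[/eqP->|/eqP->] HI]; move: HI => /andP[/orP[/eqP->|/eqP->] HI]; move: HI => /andP[/orP[/eqP->|/eqP->] HI]; move: HI => /andP[/orP[/eqP->|/eqP->] HI]; move=> H1 H2.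
    * exfalso; suff HH : (size [:: a, a, a, a & rest] <= size ([:: a; a] ++ rest))%N by move: HH; rewrite /= ?size_cat /=; (lia || (move=> HH; discriminate HH)).
    apply: H1; [by rewrite /= ?all_cat ?HI ?eqxx ?orbT ?andbT | apply: (@eqw_cat _ _ _ [:: a; a] [:: a; a; a; a] rest rest); [(move=> x; apply/ffunP => c; rewrite /Defs.weyl /= ?reflE ?fe_refl ?cartan_aa ?cab ?cba; ring) | by move=> x]].
    * exfalso; suff HH : (size [:: a, a, a, b & rest] <= size ([:: a; b] ++ rest))%N by move: HH; rewrite /= ?size_cat /=; (lia || (move=> HH; discriminate HH)).
    apply: H1; [by rewrite /= ?all_cat ?HI ?eqxx ?orbT ?andbT | apply: (@eqw_cat _ _ _ [:: a; b] [:: a; a; a; b] rest rest); [(move=> x; apply/ffunP => c; rewrite /Defs.weyl /= ?reflE ?fe_refl ?cartan_aa ?cab ?cba; ring) | by move=> x]].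
    * exfalso; suff HH : (size [:: a, a, b, a & rest] <= size ([:: b; a] ++ rest))%N by move: HH; rewrite /= ?size_cat /=; (lia || (move=> HH; discriminate HH)).
    apply: H1; [by rewrite /= ?all_cat ?HI ?eqxx ?orbT ?andbT | apply: (@eqw_cat _ _ _ [:: b; a] [:: a; a; b; a] rest rest); [(move=> x; apply/ffunP => c; rewrite /Defs.weyl /= ?reflE ?fe_refl ?cartan_aa ?cab ?cba; ring) | by move=> x]].
    * exfalso; suff HH : (size [:: a, a, b, b & rest] <= size ([:: b; b] ++ rest))%N by move: HH; rewrite /= ?size_cat /=; (lia || (move=> HH; discriminate HH)).
    apply: H1; [by rewrite /= ?all_cat ?HI ?eqxx ?orbT ?andbT | apply: (@eqw_cat _ _ _ [:: b; b] [:: a; a; b; b] rest rest); [(move=> x; apply/ffunP => c; rewrite /Defs.weyl /= ?reflE ?fe_refl ?cartan_aa ?cab ?cba; ring) | by move=> x]].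
    * exfalso; suff HH : (size [:: a, b, a, a & rest] <= size ([:: a; b] ++ rest))%N by move: HH; rewrite /= ?size_cat /=; (lia || (move=> HH; discriminate HH)).
    apply: H1; [by rewrite /= ?all_cat ?HI ?eqxx ?orbT ?andbT | apply: (@eqw_cat _ _ _ [:: a; b] [:: a; b; a; a] rest rest); [(move=> x; apply/ffunP => c; rewrite /Defs.weyl /= ?reflE ?fe_refl ?cartan_aa ?cab ?cba; ring) | by move=> x]].
    * exfalso; suff HH : (size [:: a, b, a, b & rest] <= size ([:: b; a] ++ rest))%N by move: HH; rewrite /= ?size_cat /=; (lia || (move=> HH; discriminate HH)).
    apply: H1; [by rewrite /= ?all_cat ?HI ?eqxx ?orbT ?andbT | apply: (@eqw_cat _ _ _ [:: b; a] [:: a; b; a; b] rest rest); [(move=> x; apply/ffunP => c; rewrite /Defs.weyl /= ?reflE ?fe_refl ?cartan_aa ?cab ?cba; ring) | by move=> x]].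
    * exfalso; suff HH : (size [:: a, b, b, a & rest] <= size ([:: a; a] ++ rest))%N by move: HH; rewrite /= ?size_cat /=; (lia || (move=> HH; discriminate HH)).
    apply: H1; [by rewrite /= ?all_cat ?HI ?eqxx ?orbT ?andbT | apply: (@eqw_cat _ _ _ [:: a; a] [:: a; b; b; a] rest rest); [(move=> x; apply/ffunP => c; rewrite /Defs.weyl /= ?reflE ?fe_refl ?cartan_aa ?cab ?cba; ring) | by move=> x]].
    * exfalso; suff HH : (size [:: a, b, b, b & rest] <= size ([:: a; b] ++ rest))%N by move: HH; rewrite /= ?size_cat /=; (lia || (move=> HH; discriminate HH)).
    apply: H1; [by rewrite /= ?all_cat ?HI ?eqxx ?orbT ?andbT | apply: (@eqw_cat _ _ _ [:: a; b] [:: a; b; b; b] rest rest); [(move=> x; apply/ffunP => c; rewrite /Defs.weyl /= ?reflE ?fe_refl ?cartan_aa ?cab ?cba; ring) | by move=> x]].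
    * exfalso; suff HH : (size [:: b, a, a, a & rest] <= size ([:: b; a] ++ rest))%N by move: HH; rewrite /= ?size_cat /=; (lia || (move=> HH; discriminate HH)).
    apply: H1; [by rewrite /= ?all_cat ?HI ?eqxx ?orbT ?andbT | apply: (@eqw_cat _ _ _ [:: b; a] [:: b; a; a; a] rest rest); [(move=> x; apply/ffunP => c; rewrite /Defs.weyl /= ?reflE ?fe_refl ?cartan_aa ?cab ?cba; ring) | by move=> x]].
    * exfalso; suff HH : (size [:: b, a, a, b & rest] <= size ([:: b; b] ++ rest))%N by move: HH; rewrite /= ?size_cat /=; (lia || (move=> HH; discriminate HH)).
    apply: H1; [by rewrite /= ?all_cat ?HI ?eqxx ?orbT ?andbT | apply: (@eqw_cat _ _ _ [:: b; b] [:: b; a; a; b] rest rest); [(move=> x; apply/ffunP => c; rewrite /Defs.weyl /= ?reflE ?fe_refl ?cartan_aa ?cab ?cba; ring) | by move=> x]].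
    * exfalso; suff HH : (size [:: b, a, b, a & rest] <= size ([:: a; b] ++ rest))%N by move: HH; rewrite /= ?size_cat /=; (lia || (move=> HH; discriminate HH)).
    apply: H1; [by rewrite /= ?all_cat ?HI ?eqxx ?orbT ?andbT | apply: (@eqw_cat _ _ _ [:: a; b] [:: b; a; b; a] rest rest); [(move=> x; apply/ffunP => c; rewrite /Defs.weyl /= ?reflE ?fe_refl ?cartan_aa ?cab ?cba; ring) | by move=> x]].
    * exfalso; suff HH : (size [:: b, a, b, b & rest] <= size ([:: b; a] ++ rest))%N by move: HH; rewrite /= ?size_cat /=; (lia || (move=> HH; discriminate HH)).
    apply: H1; [by rewrite /= ?all_cat ?HI ?eqxx ?orbT ?andbT | apply: (@eqw_cat _ _ _ [:: b; a] [:: b; a; b; b] rest rest); [(move=> x; apply/ffunP => c; rewrite /Defs.weyl /= ?reflE ?fe_refl ?cartan_aa ?cab ?cba; ring) | by move=> x]].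
    * exfalso; suff HH : (size [:: b, b, a, a & rest] <= size ([:: a; a] ++ rest))%N by move: HH; rewrite /= ?size_cat /=; (lia || (move=> HH; discriminate HH)).
    apply: H1; [by rewrite /= ?all_cat ?HI ?eqxx ?orbT ?andbT | apply: (@eqw_cat _ _ _ [:: a; a] [:: b; b; a; a] rest rest); [(move=> x; apply/ffunP => c; rewrite /Defs.weyl /= ?reflE ?fe_refl ?cartan_aa ?cab ?cba; ring) | by move=> x]].
    * exfalso; suff HH : (size [:: b, b, a, b & rest] <= size ([:: a; b] ++ rest))%N by move: HH; rewrite /= ?size_cat /=; (lia || (move=> HH; discriminate HH)).
    apply: H1; [by rewrite /= ?all_cat ?HI ?eqxx ?orbT ?andbT | apply: (@eqw_cat _ _ _ [:: a; b] [:: b; b; a; b] rest rest); [(move=> x; apply/ffunP => c; rewrite /Defs.weyl /= ?reflE ?fe_refl ?cartan_aa ?cab ?cba; ring) | by move=> x]].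
    * exfalso; suff HH : (size [:: b, b, b, a & rest] <= size ([:: b; a] ++ rest))%N by move: HH; rewrite /= ?size_cat /=; (lia || (move=> HH; discriminate HH)).
    apply: H1; [by rewrite /= ?all_cat ?HI ?eqxx ?orbT ?andbT | apply: (@eqw_cat _ _ _ [:: b; a] [:: b; b; b; a] rest rest); [(move=> x; apply/ffunP => c; rewrite /Defs.weyl /= ?reflE ?fe_refl ?cartan_aa ?cab ?cba; ring) | by move=> x]].
    * exfalso; suff HH : (size [:: b, b, b, b & rest] <= size ([:: b; b] ++ rest))%N by move: HH; rewrite /= ?size_cat /=; (lia || (move=> HH; discriminate HH)).
    apply: H1; [by rewrite /= ?all_cat ?HI ?eqxx ?orbT ?andbT | apply: (@eqw_cat _ _ _ [:: b; b] [:: b; b; b; b] rest rest); [(move=> x; apply/ffunP => c; rewrite /Defs.weyl /= ?reflE ?fe_refl ?cartan_aa ?cab ?cba; ring) | by move=> x]].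
- have cab : cartan a b = 0 by rewrite cab_eq (negbTE adjab).
  have cba : cartan b a = 0 by rewrite cartanC.
  clear cab_eq.
  move: HI H1 H2; case: vI => [|x1 [|x2 [|x3 [|x4 rest]]]] HI.
  + move=> H1 H2; by exists 1, 0; split; [done|split; [done|]]; apply/ffunP => c;
      rewrite /Defs.weyl /= ?reflE ?fe_refl ?fe_ev ?cartan_aa ?cab ?cba !ffunE; ring.
  + move: HI => /andP[/orP[/eqP->|/eqP->] HI]; move=> H1 H2.
    * exfalso; suff HH : (size [:: a] < size ([::] : seq V))%N by move: HH; rewrite /= ?size_cat /=; (lia || (move=> HH; discriminate HH)).
    apply: H2; [by rewrite /= ?eqxx ?orbT ?andbT | (move=> x; apply/ffunP => c; rewrite /Defs.weyl /= ?reflE ?fe_refl ?cartan_aa ?cab ?cba; ring)].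
    * by exists 1, 0; split; [done|split; [done|]]; apply/ffunP => c;
      rewrite /Defs.weyl /= ?reflE ?fe_refl ?fe_ev ?cartan_aa ?cab ?cba !ffunE; ring.
  + move: HI => /andP[/orP[/eqP->|/eqP->] HI]; move: HI => /andP[/orP[/eqP->|/eqP->] HI]; move=> H1 H2.
    * exfalso; suff HH : (size [:: a; a] <= size ([::] : seq V))%N by move: HH; rewrite /= ?size_cat /=; (lia || (move=> HH; discriminate HH)).
    apply: H1; [by rewrite /= ?all_cat ?HI ?eqxx ?orbT ?andbT | (move=> x; apply/ffunP => c; rewrite /Defs.weyl /= ?reflE ?fe_refl ?cartan_aa ?cab ?cba; ring)].
    * exfalso; suff HH : (size [:: a; b] < size [:: b])%N by move: HH; rewrite /= ?size_cat /=; (lia || (move=> HH; discriminate HH)).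
    apply: H2; [by rewrite /= ?eqxx ?orbT ?andbT | (move=> x; apply/ffunP => c; rewrite /Defs.weyl /= ?reflE ?fe_refl ?cartan_aa ?cab ?cba; ring)].
    * exfalso; suff HH : (size [:: b; a] < size [:: b])%N by move: HH; rewrite /= ?size_cat /=; (lia || (move=> HH; discriminate HH)).
    apply: H2; [by rewrite /= ?eqxx ?orbT ?andbT | (move=> x; apply/ffunP => c; rewrite /Defs.weyl /= ?reflE ?fe_refl ?cartan_aa ?cab ?cba; ring)].
    * exfalso; suff HH : (size [:: b; b] <= size ([::] : seq V))%N by move: HH; rewrite /= ?size_cat /=; (lia || (move=> HH; discriminate HH)).
    apply: H1; [by rewrite /= ?all_cat ?HI ?eqxx ?orbT ?andbT | (move=> x; apply/ffunP => c; rewrite /Defs.weyl /= ?reflE ?fe_refl ?cartan_aa ?cab ?cba; ring)].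
  + move: HI => /andP[/orP[/eqP->|/eqP->] HI]; move: HI => /andP[/orP[/eqP->|/eqP->] HI]; move: HI => /andP[/orP[/eqP->|/eqP->] HI]; move=> H1 H2.
    * exfalso; suff HH : (size [:: a; a; a] <= size [:: a])%N by move: HH; rewrite /= ?size_cat /=; (lia || (move=> HH; discriminate HH)).
    apply: H1; [by rewrite /= ?all_cat ?HI ?eqxx ?orbT ?andbT | (move=> x; apply/ffunP => c; rewrite /Defs.weyl /= ?reflE ?fe_refl ?cartan_aa ?cab ?cba; ring)].
    * exfalso; suff HH : (size [:: a; a; b] <= size [:: b])%N by move: HH; rewrite /= ?size_cat /=; (lia || (move=> HH; discriminate HH)).
    apply: H1; [by rewrite /= ?all_cat ?HI ?eqxx ?orbT ?andbT | (move=> x; apply/ffunP => c; rewrite /Defs.weyl /= ?reflE ?fe_refl ?cartan_aa ?cab ?cba; ring)].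
    * exfalso; suff HH : (size [:: a; b; a] <= size [:: b])%N by move: HH; rewrite /= ?size_cat /=; (lia || (move=> HH; discriminate HH)).
    apply: H1; [by rewrite /= ?all_cat ?HI ?eqxx ?orbT ?andbT | (move=> x; apply/ffunP => c; rewrite /Defs.weyl /= ?reflE ?fe_refl ?cartan_aa ?cab ?cba; ring)].
    * exfalso; suff HH : (size [:: a; b; b] <= size [:: a])%N by move: HH; rewrite /= ?size_cat /=; (lia || (move=> HH; discriminate HH)).
    apply: H1; [by rewrite /= ?all_cat ?HI ?eqxx ?orbT ?andbT | (move=> x; apply/ffunP => c; rewrite /Defs.weyl /= ?reflE ?fe_refl ?cartan_aa ?cab ?cba; ring)].
    * exfalso; suff HH : (size [:: b; a; a] <= size [:: b])%N by move: HH; rewrite /= ?size_cat /=; (lia || (move=> HH; discriminate HH)).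
    apply: H1; [by rewrite /= ?all_cat ?HI ?eqxx ?orbT ?andbT | (move=> x; apply/ffunP => c; rewrite /Defs.weyl /= ?reflE ?fe_refl ?cartan_aa ?cab ?cba; ring)].
    * exfalso; suff HH : (size [:: b; a; b] <= size [:: a])%N by move: HH; rewrite /= ?size_cat /=; (lia || (move=> HH; discriminate HH)).
    apply: H1; [by rewrite /= ?all_cat ?HI ?eqxx ?orbT ?andbT | (move=> x; apply/ffunP => c; rewrite /Defs.weyl /= ?reflE ?fe_refl ?cartan_aa ?cab ?cba; ring)].
    * exfalso; suff HH : (size [:: b; b; a] <= size [:: a])%N by move: HH; rewrite /= ?size_cat /=; (lia || (move=> HH; discriminate HH)).
    apply: H1; [by rewrite /= ?all_cat ?HI ?eqxx ?orbT ?andbT | (move=> x; apply/ffunP => c; rewrite /Defs.weyl /= ?reflE ?fe_refl ?cartan_aa ?cab ?cba; ring)].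
    * exfalso; suff HH : (size [:: b; b; b] <= size [:: b])%N by move: HH; rewrite /= ?size_cat /=; (lia || (move=> HH; discriminate HH)).
    apply: H1; [by rewrite /= ?all_cat ?HI ?eqxx ?orbT ?andbT | (move=> x; apply/ffunP => c; rewrite /Defs.weyl /= ?reflE ?fe_refl ?cartan_aa ?cab ?cba; ring)].
  + move: HI => /andP[/orP[/eqP->|/eqP->] HI]; move: HI => /andP[/orP[/eqP->|/eqP->] HI]; move: HI => /andP[/orP[/eqP->|/eqP->] HI]; move: HI => /andP[/orP[/eqP->|/eqP->] HI]; move=> H1 H2.
    * exfalso; suff HH : (size [:: a, a, a, a & rest] <= size ([:: a; a] ++ rest))%N by move: HH; rewrite /= ?size_cat /=; (lia || (move=> HH; discriminate HH)).
    apply: H1; [by rewrite /= ?all_cat ?HI ?eqxx ?orbT ?andbT | apply: (@eqw_cat _ _ _ [:: a; a] [:: a; a; a; a] rest rest); [(move=> x; apply/ffunP => c; rewrite /Defs.weyl /= ?reflE ?fe_refl ?cartan_aa ?cab ?cba; ring) | by move=> x]].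
    * exfalso; suff HH : (size [:: a, a, a, b & rest] <= size ([:: a; b] ++ rest))%N by move: HH; rewrite /= ?size_cat /=; (lia || (move=> HH; discriminate HH)).
    apply: H1; [by rewrite /= ?all_cat ?HI ?eqxx ?orbT ?andbT | apply: (@eqw_cat _ _ _ [:: a; b] [:: a; a; a; b] rest rest); [(move=> x; apply/ffunP => c; rewrite /Defs.weyl /= ?reflE ?fe_refl ?cartan_aa ?cab ?cba; ring) | by move=> x]].
    * exfalso; suff HH : (size [:: a, a, b, a & rest] <= size ([:: b; a] ++ rest))%N by move: HH; rewrite /= ?size_cat /=; (lia || (move=> HH; discriminate HH)).
    apply: H1; [by rewrite /= ?all_cat ?HI ?eqxx ?orbT ?andbT | apply: (@eqw_cat _ _ _ [:: b; a] [:: a; a; b; a] rest rest); [(move=> x; apply/ffunP => c; rewrite /Defs.weyl /= ?reflE ?fe_refl ?cartan_aa ?cab ?cba; ring) | by move=> x]].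
    * exfalso; suff HH : (size [:: a, a, b, b & rest] <= size ([:: b; b] ++ rest))%N by move: HH; rewrite /= ?size_cat /=; (lia || (move=> HH; discriminate HH)).
    apply: H1; [by rewrite /= ?all_cat ?HI ?eqxx ?orbT ?andbT | apply: (@eqw_cat _ _ _ [:: b; b] [:: a; a; b; b] rest rest); [(move=> x; apply/ffunP => c; rewrite /Defs.weyl /= ?reflE ?fe_refl ?cartan_aa ?cab ?cba; ring) | by move=> x]].
    * exfalso; suff HH : (size [:: a, b, a, a & rest] <= size ([:: a; b] ++ rest))%N by move: HH; rewrite /= ?size_cat /=; (lia || (move=> HH; discriminate HH)).
    apply: H1; [by rewrite /= ?all_cat ?HI ?eqxx ?orbT ?andbT | apply: (@eqw_cat _ _ _ [:: a; b] [:: a; b; a; a] rest rest); [(move=> x; apply/ffunP => c; rewrite /Defs.weyl /= ?reflE ?fe_refl ?cartan_aa ?cab ?cba; ring) | by move=> x]].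
    * exfalso; suff HH : (size [:: a, b, a, b & rest] <= size (([::] : seq V) ++ rest))%N by move: HH; rewrite /= ?size_cat /=; (lia || (move=> HH; discriminate HH)).
    apply: H1; [by rewrite /= ?all_cat ?HI ?eqxx ?orbT ?andbT | apply: (@eqw_cat _ _ _ ([::] : seq V) [:: a; b; a; b] rest rest); [(move=> x; apply/ffunP => c; rewrite /Defs.weyl /= ?reflE ?fe_refl ?cartan_aa ?cab ?cba; ring) | by move=> x]].
    * exfalso; suff HH : (size [:: a, b, b, a & rest] <= size ([:: a; a] ++ rest))%N by move: HH; rewrite /= ?size_cat /=; (lia || (move=> HH; discriminate HH)).
    apply: H1; [by rewrite /= ?all_cat ?HI ?eqxx ?orbT ?andbT | apply: (@eqw_cat _ _ _ [:: a; a] [:: a; b; b; a] rest rest); [(move=> x; apply/ffunP => c; rewrite /Defs.weyl /= ?reflE ?fe_refl ?cartan_aa ?cab ?cba; ring) | by move=> x]].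
    * exfalso; suff HH : (size [:: a, b, b, b & rest] <= size ([:: a; b] ++ rest))%N by move: HH; rewrite /= ?size_cat /=; (lia || (move=> HH; discriminate HH)).
    apply: H1; [by rewrite /= ?all_cat ?HI ?eqxx ?orbT ?andbT | apply: (@eqw_cat _ _ _ [:: a; b] [:: a; b; b; b] rest rest); [(move=> x; apply/ffunP => c; rewrite /Defs.weyl /= ?reflE ?fe_refl ?cartan_aa ?cab ?cba; ring) | by move=> x]].
    * exfalso; suff HH : (size [:: b, a, a, a & rest] <= size ([:: b; a] ++ rest))%N by move: HH; rewrite /= ?size_cat /=; (lia || (move=> HH; discriminate HH)).
    apply: H1; [by rewrite /= ?all_cat ?HI ?eqxx ?orbT ?andbT | apply: (@eqw_cat _ _ _ [:: b; a] [:: b; a; a; a] rest rest); [(move=> x; apply/ffunP => c; rewrite /Defs.weyl /= ?reflE ?fe_refl ?cartan_aa ?cab ?cba; ring) | by move=> x]].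
    * exfalso; suff HH : (size [:: b, a, a, b & rest] <= size ([:: b; b] ++ rest))%N by move: HH; rewrite /= ?size_cat /=; (lia || (move=> HH; discriminate HH)).
    apply: H1; [by rewrite /= ?all_cat ?HI ?eqxx ?orbT ?andbT | apply: (@eqw_cat _ _ _ [:: b; b] [:: b; a; a; b] rest rest); [(move=> x; apply/ffunP => c; rewrite /Defs.weyl /= ?reflE ?fe_refl ?cartan_aa ?cab ?cba; ring) | by move=> x]].
    * exfalso; suff HH : (size [:: b, a, b, a & rest] <= size (([::] : seq V) ++ rest))%N by move: HH; rewrite /= ?size_cat /=; (lia || (move=> HH; discriminate HH)).
    apply: H1; [by rewrite /= ?all_cat ?HI ?eqxx ?orbT ?andbT | apply: (@eqw_cat _ _ _ ([::] : seq V) [:: b; a; b; a] rest rest); [(move=> x; apply/ffunP => c; rewrite /Defs.weyl /= ?reflE ?fe_refl ?cartan_aa ?cab ?cba; ring) | by move=> x]].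
    * exfalso; suff HH : (size [:: b, a, b, b & rest] <= size ([:: b; a] ++ rest))%N by move: HH; rewrite /= ?size_cat /=; (lia || (move=> HH; discriminate HH)).
    apply: H1; [by rewrite /= ?all_cat ?HI ?eqxx ?orbT ?andbT | apply: (@eqw_cat _ _ _ [:: b; a] [:: b; a; b; b] rest rest); [(move=> x; apply/ffunP => c; rewrite /Defs.weyl /= ?reflE ?fe_refl ?cartan_aa ?cab ?cba; ring) | by move=> x]].
    * exfalso; suff HH : (size [:: b, b, a, a & rest] <= size ([:: a; a] ++ rest))%N by move: HH; rewrite /= ?size_cat /=; (lia || (move=> HH; discriminate HH)).
    apply: H1; [by rewrite /= ?all_cat ?HI ?eqxx ?orbT ?andbT | apply: (@eqw_cat _ _ _ [:: a; a] [:: b; b; a; a] rest rest); [(move=> x; apply/ffunP => c; rewrite /Defs.weyl /= ?reflE ?fe_refl ?cartan_aa ?cab ?cba; ring) | by move=> x]].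
    * exfalso; suff HH : (size [:: b, b, a, b & rest] <= size ([:: a; b] ++ rest))%N by move: HH; rewrite /= ?size_cat /=; (lia || (move=> HH; discriminate HH)).
    apply: H1; [by rewrite /= ?all_cat ?HI ?eqxx ?orbT ?andbT | apply: (@eqw_cat _ _ _ [:: a; b] [:: b; b; a; b] rest rest); [(move=> x; apply/ffunP => c; rewrite /Defs.weyl /= ?reflE ?fe_refl ?cartan_aa ?cab ?cba; ring) | by move=> x]].
    * exfalso; suff HH : (size [:: b, b, b, a & rest] <= size ([:: b; a] ++ rest))%N by move: HH; rewrite /= ?size_cat /=; (lia || (move=> HH; discriminate HH)).
    apply: H1; [by rewrite /= ?all_cat ?HI ?eqxx ?orbT ?andbT | apply: (@eqw_cat _ _ _ [:: b; a] [:: b; b; b; a] rest rest); [(move=> x; apply/ffunP => c; rewrite /Defs.weyl /= ?reflE ?fe_refl ?cartan_aa ?cab ?cba; ring) | by move=> x]].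
    * exfalso; suff HH : (size [:: b, b, b, b & rest] <= size ([:: b; b] ++ rest))%N by move: HH; rewrite /= ?size_cat /=; (lia || (move=> HH; discriminate HH)).
    apply: H1; [by rewrite /= ?all_cat ?HI ?eqxx ?orbT ?andbT | apply: (@eqw_cat _ _ _ [:: b; b] [:: b; b; b; b] rest rest); [(move=> x; apply/ffunP => c; rewrite /Defs.weyl /= ?reflE ?fe_refl ?cartan_aa ?cab ?cba; ring) | by move=> x]].

Qed.
End Roots.


Section Roots.
Variables (r k : nat) (s : 'I_k -> nat).
Local Notation V := (vert r s).
Local Notation vec := {ffun V -> int}.

Definition nonneg (x : vec) := forall c, 0 <= x c.

Lemma L_rcons_red (u : seq V) b : L (rcons u b) = size (rcons u b) -> L u = size u.
Proof.
move=> H; have h1 := L_size u; have h2 := L_rcons_le u b.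
rewrite H size_rcons in h2; lia.
Qed.

Lemma eqw_cons2 (a : V) (w : seq V) : eqw [:: a, a & w] w.
Proof. by move=> x /=; rewrite refl_invol. Qed.

Theorem pos_root n : forall (w : seq V) a, L w = n -> (n < L (rcons w a))%N ->
  nonneg (weyl w (evec a)).
Proof.
elim/ltn_ind: n => n IH w a Lw Lwa.
have [u [su Eu]] := L_spec w.
have Lu : L u = n by rewrite (L_eqw Eu).
have Lua : L (rcons u a) = L (rcons w a) by rewrite (L_eqw (eqw_rcons a Eu)).
rewrite -Eu; rewrite -Lua in Lwa; rewrite Lw in su; clear w Eu Lw Lua.
case/lastP: u su Lu Lwa => [|u' b] su Lu Lwa.
  by move=> c; rewrite /= evE; case: eqP.
have Lu' : L u' = size u' by apply: (@L_rcons_red u' b); rewrite Lu su.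
rewrite size_rcons in su.
have ba : b != a.
  apply/eqP => e; rewrite e in Lu Lwa.
  by rewrite (L_eqw (eqw_rrcons u' a)) Lu' -su in Lwa; lia.
pose inI := fun c : V => (c == a) || (c == b).
pose cand m := pb (exists v vI, all inI vI /\ eqw (v ++ vI) (rcons u' b)
                      /\ (L v + size vI)%N = n /\ L v = m).
have ex_cand : exists m, cand m.
  exists (L u'); apply/pbP; exists u', [:: b]; split; first by rewrite /= /inI eqxx orbT.
  split; first by rewrite cats1.
  by split => //; rewrite Lu' /= -su addn1.
case: (ex_minnP ex_cand) => m0 /pbP [v [vI [HI [Ev [Hn Hm]]]]] Hmin.
have Lv : (L v < n)%N.
  have : (m0 <= L u')%N.
    apply: Hmin; apply/pbP; exists u', [:: b]; split; first by rewrite /= /inI eqxx orbT.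
    split; first by rewrite cats1.
    by split => //; rewrite Lu' /= -su addn1.
  lia.
have grow : forall c, inI c -> (L v < L (rcons v c))%N.
  move=> c Ic; case: (L_rcons v c) => [->|e]; first by lia.
  have : (m0 <= L (rcons v c))%N.
    apply: Hmin; apply/pbP; exists (rcons v c), (c :: vI); split; first by rewrite /= Ic.
    split.
      apply: eqw_trans Ev; rewrite cat_rcons.
      by apply: eqw_cat => [x|]; [done | exact: eqw_cons2].
    by split; last by []; change (size (c :: vI)) with (size vI).+1; clear -Hn e; lia.
  clear -Hm e; lia.
have pa : nonneg (weyl v (evec a)) by apply: (IH _ Lv v a erefl); apply: grow; rewrite /inI eqxx.
have pb' : nonneg (weyl v (evec b)) by apply: (IH _ Lv v b erefl); apply: grow; rewrite /inI eqxx orbT.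
have H1 : forall z, all inI z -> eqw z vI -> (size vI <= size z)%N.
  move=> z _ Ez.
  have : (L (rcons u' b) <= L v + size z)%N.
    rewrite -(L_eqw (u := v ++ z)); last exact: eqw_trans (eqw_cat (fun x => erefl) Ez) Ev.
    by apply: leq_trans (L_cat _ _) _; rewrite leq_add2l L_size.
  clear -Hn Lu; lia.
have H2 : forall z, all inI z -> eqw z (rcons vI a) -> (size vI < size z)%N.
  move=> z _ Ez.
  have : (L (rcons (rcons u' b) a) <= L v + size z)%N.
    rewrite -(L_eqw (u := v ++ z)); last first.
      apply: eqw_trans (eqw_rcons a Ev); rewrite rcons_cat.
      exact: (eqw_cat (fun x => erefl) Ez).
    by apply: leq_trans (L_cat _ _) _; rewrite leq_add2l L_size.
  clear -Hn Lu Lwa; lia.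
have ab : a != b by rewrite eq_sym.
have [p [q [p0 [q0 E]]]] := dihedral ab HI H1 H2.
move=> c; rewrite -Ev weyl_cat E weyl_comb ffunE.
by apply: addr_ge0; apply: mulr_ge0.
Qed.

End Roots.


Section Roots.
Variables (r k : nat) (s : 'I_k -> nat).
Local Notation V := (vert r s).
Local Notation vec := {ffun V -> int}.

Lemma nat_bool (j p S : nat) : (0 < p <= S)%N -> (j <= S)%N ->
  ((j.+1 == p) || (p.+1 == j)) = ((j == p.-1) || ((p < S)%N && (j == p.+1))).
Proof.
move=> /andP [H1 H2] H3.
by do ![case: eqP => ?]; case: ltnP => ? //=; lia.
Qed.

Local Notation A i j := (@arm r k s i j).

Lemma arm_eq (i : 'I_k) (p q : nat) : (p <= s i)%N -> (q <= s i)%N ->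
  (A i (inord p) == A i (inord q)) = (p == q).
Proof.
move=> hp hq; rewrite /arm.
apply/eqP/eqP => [[] /eqP|->] //.
by rewrite eq_Tagged => /eqP H; have := congr1 val H; rewrite /= !inordK.
Qed.


Lemma ord_inord_eq (n : nat) (j : 'I_n.+1) (q : nat) : (q <= n)%N ->
  (j == inord q) = (nat_of_ord j == q).
Proof. by move=> hq; rewrite -(inj_eq val_inj) /= inordK. Qed.

Lemma arm_eq' (i : 'I_k) (j j2 : 'I_(s i).+1) : (A i j == A i j2) = (j == j2).
Proof.
rewrite /arm; apply/eqP/eqP => [[] /eqP|->] //.
by rewrite eq_Tagged => /eqP.
Qed.

Lemma adj_arm (i : 'I_k) (p : nat) (b : V) : (0 < p <= s i)%N ->
  adj b (A i (inord p)) =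
  (b == A i (inord p.-1)) || ((p < s i)%N && (b == A i (inord p.+1))).
Proof.
move=> hp; have /andP [h1 h2] := hp; case: b => [l|[i' j']].
  by rewrite /arm /= inordK ?(gtn_eqF h1) ?andbF.
case: (eqVneq i' i) => [e|ne].
  subst i'.
  have -> : inr (existT (fun i0 => 'I_(s i0).+1) i j') = A i j' by [].
  rewrite !arm_eq' /arm /= eqxx /= inordK; last lia.
  case: (ltnP p (s i)) => hps.
    rewrite !ord_inord_eq; [|lia|lia].
    by rewrite (@nat_bool j' p (s i) hp (ltn_ord j')) hps.
  rewrite ord_inord_eq; last lia.
  by rewrite (@nat_bool j' p (s i) hp (ltn_ord j')) ltnNge hps.
rewrite /arm /= (negbTE ne) /=.
have F : forall q, (inr (existT (fun i0 => 'I_(s i0).+1) i' j') == A i q :> V) = false.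
  move=> q; apply/negbTE/negP => /eqP /(congr1 (fun b : V => if b is inr x then tag x else i)) /= E.
  by move: ne; rewrite E eqxx.
by rewrite !F andbF.
Qed.


Lemma refl_ne (a c : V) (x : vec) : a != c -> refl a x c = x c.
Proof. by move=> ac; rewrite reflE evE (negbTE ac) mulr0 subr0. Qed.

Lemma fe_arm (i : 'I_k) (p : nat) (x : vec) : (0 < p <= s i)%N ->
  form x (evec (A i (inord p))) = 2 * x (A i (inord p)) - x (A i (inord p.-1))
     - (if (p < s i)%N then x (A i (inord p.+1)) else 0).
Proof.
move=> hp; have /andP [h1 h2] := hp.
set a := A i (inord p); set b1 := A i (inord p.-1); set b2 := A i (inord p.+1).
have ne1 : b1 != a by rewrite arm_eq; lia.
have c1 : cartan b1 a = -1.
  by rewrite cartan_ne // adj_arm // eqxx.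
rewrite feE (bigD1 a) //= cartan_aa (bigD1 b1) ?ne1 //= c1.
case: (ltnP p (s i)) => hps.
  have ne2 : b2 != a by rewrite arm_eq; lia.
  have ne21 : b2 != b1 by rewrite arm_eq; lia.
  have c2 : cartan b2 a = -1.
    by rewrite cartan_ne // adj_arm // eqxx hps orbT.
  rewrite (bigD1 b2) ?ne2 ?ne21 //= c2 big1 ?addr0; first by ring.
  move=> b /andP [/andP [ba bb1] bb2]; rewrite cartan_ne // adj_arm //.
  by rewrite (negbTE bb1) (negbTE bb2) andbF /= mulr0.
rewrite big1 ?addr0; first by ring.
move=> b /andP [ba bb1]; rewrite cartan_ne // adj_arm //.
by rewrite (negbTE bb1) ltnNge hps /= mulr0.
Qed.

Lemma refl_arm_same (i : 'I_k) (p : nat) (x : vec) : (0 < p <= s i)%N ->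
  refl (A i (inord p)) x (A i (inord p)) =
  x (A i (inord p.-1)) + (if (p < s i)%N then x (A i (inord p.+1)) else 0)
  - x (A i (inord p)).
Proof. by move=> hp; rewrite reflE fe_arm // evE eqxx; ring. Qed.

Fixpoint tau (i : 'I_k) (j d : nat) : seq V :=
  if d is d'.+1 then A i (inord (j + d'.+1)) :: tau i j d' else [::].

Lemma tau_inv (i : 'I_k) (j : nat) (v : vec) : (j < s i)%N -> forall d, (j + d <= s i)%N ->
  [/\ weyl (tau i j d) v (A i (inord (j + d))) =
        v (A i (inord j)) - v (A i (inord j.+1))
        + (if (j + d < s i)%N then v (A i (inord (j + d).+1)) else 0),
      (forall q, (j + d < q <= s i)%N -> weyl (tau i j d) v (A i (inord q)) = v (A i (inord q)))
    & weyl (tau i j d) v (A i (inord 0)) = v (A i (inord 0))].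
Proof.
move=> hj; elim=> [|d IH] hd.
  by rewrite addn0 hj /=; split => //; ring.
have hd' : (j + d <= s i)%N by apply: leq_trans hd; rewrite addnS.
have [IH1 IH2 IH3] := IH hd'.
rewrite /= !addnS in hd *.
have hm : (0 < (j + d).+1 <= s i)%N by rewrite hd.
split.
- rewrite refl_arm_same // /= IH1 hd (IH2 (j + d).+1); last by rewrite ltnSn.
  case: ifP => H; last by ring.
  by rewrite IH2; [ring | apply/andP; split; lia].
- move=> q /andP [q1 q2]; rewrite refl_ne; last by rewrite arm_eq //; lia.
  by rewrite IH2 //; apply/andP; split; lia.
- by rewrite refl_ne ?IH3 // arm_eq.
Qed.

End Roots.


Section Roots.
Variables (r k : nat) (s : 'I_k -> nat).
Local Notation V := (vert r s).
Local Notation vec := {ffun V -> int}.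
Local Notation A i j := (@arm r k s i j).

Lemma refl_self (a : V) : refl a (evec a) = comb (-1) (evec a) 0 (evec a).
Proof. by apply/ffunP => c; rewrite reflE fe_ev cartan_aa !ffunE; ring. Qed.

Lemma real_coh (w : seq V) a :
  nonneg (weyl w (evec a)) \/ (forall c, weyl w (evec a) c <= 0).
Proof.
case: (L_rcons w a) => e.
  by left; apply: (@pos_root _ _ _ (L w)) => //; rewrite e ltnSn.
right; have H : nonneg (weyl (rcons w a) (evec a)).
  apply: (@pos_root _ _ _ (L (rcons w a))) => //.
  by rewrite (L_eqw (eqw_rrcons w a)) e ltnSn.
move=> c; have := H c; rewrite weyl_rcons refl_self weyl_comb ffunE.
by rewrite mulN1r mul0r addr0 oppr_ge0.
Qed.

Lemma imag_pos (d : vec) : nonneg d -> (forall a, form (evec a) d <= 0) ->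
  forall n (w : seq V), L w = n -> forall c, d c <= weyl w d c.
Proof.
move=> dpos dform; elim/ltn_ind => n IH w Lw c.
have [u [su Eu]] := L_spec w.
rewrite -Eu; rewrite Lw in su; have Lu : L u = n by rewrite (L_eqw Eu).
clear w Eu Lw.
case/lastP: u su Lu => [|u' b] su Lu; first by [].
have Lu' : L u' = size u' by apply: (@L_rcons_red _ _ _ u' b); rewrite Lu su.
rewrite size_rcons in su.
have pb : nonneg (weyl u' (evec b)).
  by apply: (@pos_root _ _ _ (L u')) => //; rewrite Lu Lu' su.
rewrite weyl_rcons.
have -> : refl b d = comb 1 d (- form d (evec b)) (evec b).
  by apply/ffunP => x; rewrite reflE !ffunE; ring.
rewrite weyl_comb ffunE mul1r.
apply: (le_trans (IH _ _ u' erefl c)); first by rewrite Lu' -su.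
rewrite lerDl; apply: mulr_ge0 => //.
by rewrite oppr_ge0 -form_evl.
Qed.

Lemma root_orbit (v : vec) (tw : seq V) c0 :
  is_root v -> 0 < weyl tw v c0 -> nonneg (weyl tw v).
Proof.
case => [[a [w ->]] | [d [w [[dn0 dpos dconn dform] [->|->]]]]] H.
- rewrite -weyl_cat in H *; case: (real_coh (tw ++ w) a) => // Hn.
  by have := lt_le_trans H (Hn c0); rewrite ltxx.
- rewrite -weyl_cat => c.
  exact: le_trans (dpos c) (imag_pos dpos dform erefl c).
- have E : [ffun b => - weyl w d b] = comb (-1) (weyl w d) 0 (weyl w d).
    by apply/ffunP => b; rewrite !ffunE; ring.
  move: H; rewrite E weyl_comb ffunE -weyl_cat mulN1r mul0r addr0 oppr_gt0.
  move=> Hlt; have := le_lt_trans (le_trans (dpos c0) (imag_pos dpos dform erefl c0)) Hlt.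
  by rewrite ltxx.
Qed.

Lemma step (i : 'I_k) (v : vec) : is_root v -> 0 < v (A i ord0) ->
  forall j, (j < s i)%N -> v (A i (inord j.+1)) <= v (A i (inord j)).
Proof.
move=> Hr H0 j hj.
have hd : (j + (s i - j) <= s i)%N by rewrite subnKC // ltnW.
have [h1 _ h3] := tau_inv v hj hd.
have ord0E : (inord 0 : 'I_(s i).+1) = ord0 by apply: val_inj; rewrite /= inordK.
have Hn : nonneg (weyl (tau r s i j (s i - j)) v).
  by apply: (root_orbit (c0 := A i (inord 0)) Hr); rewrite h3 ord0E.
move: (Hn (A i (inord (j + (s i - j))))); rewrite h1 subnKC ?(ltnW hj) // ltnn addr0.
by rewrite subr_ge0.
Qed.

End Roots.

Theorem lemma2p7 (r k : nat) (s : 'I_k -> nat) (v : {ffun vert r s -> int}) :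
  (forall a, 0 <= v a) -> is_root v ->
  forall i : 'I_k, 0 < v (@arm r k s i ord0) ->
  forall j1 j2 : 'I_(s i).+1, (j1 <= j2)%N -> v (@arm r k s i j2) <= v (@arm r k s i j1).
Proof.
move=> _ Hr i H0 j1 j2 hj.
have key : forall d (j : nat), (j + d <= s i)%N ->
    v (@arm r k s i (inord (j + d))) <= v (@arm r k s i (inord j)).
  elim=> [|d IH] j hjd; first by rewrite addn0.
  have hjd' : (j + d <= s i)%N by apply: leq_trans hjd; rewrite addnS.
  apply: (le_trans _ (IH j hjd')); rewrite addnS.
  by apply: step => //; rewrite -addnS.
have := key (j2 - j1)%N j1; rewrite subnKC // !inord_val; apply.
by rewrite -ltnS.
Qed.
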